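(* Let $k$ and $r$ be positive integers such that $r \mid k$ and $k \ge 2r$. Let $\chi : \{1, 2, \ldots, rk-2r+1\} \to \{0,1\}$ be a 2-coloring such that $\chi(1) = 0$ and, if $r \ge 2$, $\chi(r-1) = 0$. Then there exists a solution $(\hat{x}_1, \ldots, \hat{x}_k)$ of the equation $x_1 + \cdots + x_{k-1} = x_k$ with all $\hat{x}_i \in \{1, \ldots, rk-2r+1\}$ such that $\sum_{i=1}^k \chi(\hat{x}_i) \equiv 0 \pmod r$.
   Context: Solutions of the equation $x_1 + \cdots + x_{k-1} = x_k$ are taken in positive integers. A solution $(\hat{x}_1,\ldots,\hat{x}_k)$ is called $r$-zero-sum under $\chi$ if $\sum_{i=1}^k \chi(\hat{x}_i) \equiv 0 \pmod r$. *)

(* Defs.v *)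
From mathcomp Require Import all_boot.
Set Implicit Arguments. Unset Strict Implicit. Unset Printing Implicit Defensive.

(* A solution (x_1,...,x_k) of x_1 + ... + x_{k-1} = x_k is encoded as
   x : nat -> nat with x i = x_{i+1} for i < k. *)
Definition is_solution (k : nat) (x : nat -> nat) : Prop :=
  \sum_(i < k.-1) x i = x k.-1.

Definition entries_in (k N : nat) (x : nat -> nat) : Prop :=
  forall i, i < k -> 1 <= x i <= N.

Definition zero_sum (r k : nat) (chi : nat -> bool) (x : nat -> nat) : Prop :=
  \sum_(i < k) (chi (x i) : nat) = 0 %[mod r].

(* Main.v *)
Require Import Defs.
From mathcomp Require Import all_boot.
From mathcomp Require Import zify.

Lemma sum_if (G : nat -> nat) m A a b :
  \sum_(i < m) G (if i < A then a else b) = minn A m * G a + (m - A) * G b.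
Proof.
elim: m => [|m IH]; first by rewrite big_ord0 minn0 sub0n.
rewrite big_ord_recr /= IH.
case: (ltnP m A) => H.
- have -> : minn A m.+1 = m.+1 by apply/minn_idPr.
  have -> : m - A = 0 by apply/eqP; rewrite subn_eq0 ltnW.
  have -> : m.+1 - A = 0 by apply/eqP; rewrite subn_eq0.
  by rewrite mulSn !mul0n !addn0 addnC.
- have -> : minn A m.+1 = A by apply/minn_idPl; exact: leqW.
  by rewrite subSn // mulSn [G b + _]addnC addnA.
Qed.

Definition mk (m A a b t : nat) : nat -> nat :=
  fun i => if i < m then (if i < A then a else b) else t.

Lemma mk_sol m A a b t : A <= m -> A * a + (m - A) * b = t ->
  is_solution m.+1 (mk m A a b t).
Proof.
move=> HA Ht; rewrite /is_solution /= /mk ltnn.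
transitivity (\sum_(i < m) id (if i < A then a else b)).
  by apply: eq_bigr => i _; rewrite ltn_ord.
by rewrite (sum_if id); move/minn_idPl: HA => ->.
Qed.

Lemma mk_col (chi : nat -> bool) m A a b t : A <= m ->
  \sum_(i < m.+1) (chi (mk m A a b t i) : nat) =
  A * chi a + (m - A) * chi b + chi t.
Proof.
move=> HA; rewrite big_ord_recr /= /mk ltnn.
set G := fun v => (chi v : nat).
transitivity (\sum_(i < m) G (if i < A then a else b) + chi t).
  by congr (_ + _); apply: eq_bigr => i _; rewrite /= ltn_ord.
by rewrite (sum_if G); move/minn_idPl: HA => ->.
Qed.

Lemma mk_ent m A a b t N : 1 <= a <= N -> 1 <= b <= N -> 1 <= t <= N ->
  entries_in m.+1 N (mk m A a b t).
Proof.
move=> Ha Hb Ht i _; rewrite /mk; case: (i < m) => //; by case: (i < A).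
Qed.

Lemma arith r m : 2 <= r -> 2 * r <= m.+1 ->
 let N := r * m.+1 - 2 * r + 1 in
 (r - 1) * m + (m - (r - 1)) * 1 = N /\ 1 <= m <= N /\ 1 <= N <= N /\ r - 1 <= m /\
 (m.+1 - r) * r + (m - (m.+1 - r)) * (r - 1) = N /\ 1 <= r <= N /\ 1 <= r - 1 <= N /\ m.+1 - r <= m
 /\ (m - 1) * r + (m - (m-1)) * 1 = N /\ m - 1 <= m /\ 1 <= 1 <= N.
Proof.
move=> Hr Hk N; subst N.
have [p Ep] : exists p, r = p.+2 by exists (r - 2); lia.
subst r.
have [s E] : exists s, m.+1 = 2 * p.+2 + s by exists (m.+1 - 2 * p.+2); lia.
rewrite E; have -> : m = 2 * p.+2 + s - 1 by lia.
nia.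
Qed.

Theorem lemma1 (k r : nat) (chi : nat -> bool) :
  0 < k -> 0 < r -> r %| k -> 2 * r <= k ->
  chi 1 = false -> (2 <= r -> chi (r - 1) = false) ->
  exists x : nat -> nat,
    [/\ is_solution k x, entries_in k (r * k - 2 * r + 1) x & zero_sum r k chi x].
Proof.
case: k => [//|m] _ Hr Hdvd Hk H1 Hr1.
set N := r * m.+1 - 2 * r + 1.
have Hm : m <= N by rewrite /N; nia.
have Hcase1 : chi m = false \/ r = 1 -> exists x : nat -> nat,
    [/\ is_solution m.+1 x, entries_in m.+1 N x & zero_sum r m.+1 chi x].
  move=> H; exists (mk m m 1 1 m); split.
  - apply: mk_sol => //; rewrite subnn; lia.
  - apply: mk_ent; lia.
  - rewrite /zero_sum mk_col // H1 subnn.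
    case: H => [-> | ->]; first by rewrite !muln0.
    by rewrite !modn1.
case: (boolP (chi m)) => Cm; last by apply: Hcase1; left; apply/negbTE.
have [Hre|Hr2] : r = 1 \/ 2 <= r by lia.
  by apply: Hcase1; right.
have [A1 [A2 [A3 [A4 [A5 [A6 [A7 [A8 [A9 [A10 A11]]]]]]]]]] := arith r m Hr2 Hk.
case: (boolP (chi N)) => CN.
- exists (mk m (r - 1) m 1 N); split.
  + exact: mk_sol.
  + exact: mk_ent.
  + rewrite /zero_sum mk_col //.
    rewrite Cm CN H1 muln0 addn0 muln1 addn1 subn1 prednK //.
    by rewrite modnn mod0n.
- case: (boolP (chi r)) => Cr.
  + exists (mk m (m.+1 - r) r (r - 1) N); split.
    * exact: mk_sol.
    * exact: mk_ent.
    * rewrite /zero_sum mk_col //.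
      rewrite Cr (negbTE CN) (Hr1 Hr2) muln0 !addn0 muln1.
      case/dvdnP: Hdvd => q Hq; rewrite Hq -{2}(mul1n r) -mulnBl.
      by rewrite modnMl mod0n.
  + exists (mk m (m - 1) r 1 N); split.
    * exact: mk_sol.
    * exact: mk_ent.
    * rewrite /zero_sum mk_col //.
      by rewrite (negbTE Cr) (negbTE CN) H1 !muln0.
Qed.
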